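(* Let $n\ge2$, $r\ge3n+2$ and $s=r(3n+2)+3$. The numerical semigroup $\Gamma_{B_{nr}}=\langle s,\,s+3,\,s+3n+1,\,s+3n+2\rangle$ is homogeneous.
   Context: For a numerical semigroup $\Gamma=\langle n_1,\dots,n_e\rangle$ (minimally generated, here with $n_1=s$) and $0\neq t\in\Gamma$, the set of lengths is $\mathcal T(t)=\{\sum_i r_i : t=\sum_i r_in_i,\ r_i\in\mathbb{N}\}$. A subset $T\subset\Gamma$ is homogeneous if it is empty or $\mathcal T(t)$ is a singleton for all $0\neq t\in T$. $\Gamma$ is homogeneous if the Apéry set $\mathrm{Ap}(\Gamma,n_1)=\{t\in\Gamma: t-n_1\notin\Gamma\}$ is homogeneous. *)

(* Defs.v *)
From mathcomp Require Import all_boot.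
Set Implicit Arguments. Unset Strict Implicit. Unset Printing Implicit Defensive.

(* A numerical semigroup is given by its list of generators [gens = n_1; ...; n_e].
   A factorization of t is a coefficient list r (same length) with
   t = \sum_i r_i n_i; its length is \sum_i r_i. *)
Definition is_factorization (gens : seq nat) (t : nat) (r : seq nat) : Prop :=
  size r = size gens /\
  t = \sum_(i < size gens) nth 0 r i * nth 0 gens i.

Definition in_semigroup (gens : seq nat) (t : nat) : Prop :=
  exists r, is_factorization gens t r.

Definition is_length (gens : seq nat) (t l : nat) : Prop :=
  exists r, is_factorization gens t r /\ sumn r = l.

(* Apery set Ap(Gamma, n_1) with n_1 the first generator:
   t in Gamma and t - n_1 not in Gamma (as an integer; so t < n_1 counts as
   t - n_1 notin Gamma). *)
Definition in_apery (gens : seq nat) (t : nat) : Prop :=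
  in_semigroup gens t /\ ~ (head 0 gens <= t /\ in_semigroup gens (t - head 0 gens)).

Definition homogeneous_subset (gens : seq nat) (T : nat -> Prop) : Prop :=
  forall t, T t -> t <> 0 -> exists l, forall l', is_length gens t l' <-> l' = l.

Definition homogeneous_semigroup (gens : seq nat) : Prop :=
  homogeneous_subset gens (in_apery gens).

(* Main.v *)
Require Import Defs.
From mathcomp Require Import all_boot.
From mathcomp Require Import zify.

Definition valG (n r a x y z : nat) :=
  a * (r * (3 * n + 2) + 3) + x * (r * (3 * n + 2) + 3 + 3) + y * (r * (3 * n + 2) + 3 + 3 * n + 1)
        + z * (r * (3 * n + 2) + 3 + 3 * n + 2).

Lemma factE n r t rr :
  let s := r * (3 * n + 2) + 3 in
  is_factorization [:: s; s + 3; s + 3 * n + 1; s + 3 * n + 2] t rr ->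
  exists a x y z, rr = [:: a; x; y; z] /\ t = valG n r a x y z.
Proof.
move=> s; case=> hs ->.
case: rr hs => [|a [|x [|y [|z [|? ?]]]]] //= _.
exists a, x, y, z; split=> //.
rewrite !big_ord_recl big_ord0 /= /valG /s. lia.
Qed.

Lemma memE n r a x y z :
  let s := r * (3 * n + 2) + 3 in
  in_semigroup [:: s; s + 3; s + 3 * n + 1; s + 3 * n + 2] (valG n r a x y z).
Proof.
move=> s; exists [:: a; x; y; z]; split=> //.
rewrite /= !big_ord_recl big_ord0 /= /valG /s. lia.
Qed.

Lemma ap_shape n r (hn : 2 <= n) (hr : 3 * n + 2 <= r) t a x y z :
  let s := r * (3 * n + 2) + 3 in
  in_apery [:: s; s + 3; s + 3 * n + 1; s + 3 * n + 2] t ->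
  t = valG n r a x y z -> a = 0 /\ y + z <= r + 1.
Proof.
move=> s [_ Hnot] ht.
have key : forall a' x' y' z', t = s + valG n r a' x' y' z' -> False.
  move=> a' x' y' z' e; apply: Hnot; split; first by rewrite /= e leq_addr.
  by rewrite /= e addKn; apply: memE.
case: a ht => [|a] ht; last first.
  by exfalso; apply: (key a x y z); rewrite ht /valG /s; lia.
split=> //.
case: (leqP (3 * n + 2) y) => hy.
  exfalso; have [y' ey] : exists y', y = 3 * n + 2 + y' by exists (y - (3 * n + 2)); lia.
  apply: (key 0 x y' (z + 3 * n + 1)); rewrite ht ey /valG /s; lia.
case: (leqP (y + z) (r + 1)) => hyz //.
exfalso.
have [z' ez] : exists z', z = r + 2 - y + z' by exists (z - (r + 2 - y)); lia.
have [w ew] : exists w, r = 3 * n + 2 + w by exists (r - (3 * n + 2)); lia.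
have hdiv := divn_eq y 3; have hmod := ltn_pmod y (isT : 0 < 3).
move: hdiv hmod; set q := y %/ 3; set e := y %% 3 => hdiv hmod.
have hq : q <= n by lia.
have [p ep] : exists p, n = q + p by exists (n - q); lia.
have hzz : z = 3 * n + 4 + w - y + z' by lia.
clear ez.
case: e hdiv hmod => [|[|[|e]]] hdiv hmod //.
- apply: (key (3 * q + 2 * p + 3 + w) (x + p) 1 z').
  rewrite ht hzz ew ep hdiv /valG /s.
  have -> : 3 * (q + p) + 4 + w - (q * 3 + 0) = 3 * p + 4 + w by lia.
  lia.
- apply: (key (2 * q + p + 4 + w) (x + q + 2 * p) 0 z').
  rewrite ht hzz ew ep hdiv /valG /s.
  have -> : 3 * (q + p) + 4 + w - (q * 3 + 1) = 3 * p + 3 + w by lia.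
  lia.
- have [p' ep'] : exists p', p = p'.+1 by exists p.-1; lia.
  apply: (key (3 * q + 2 * p + 4 + w) (x + p') 0 (z' + 1)).
  rewrite ht hzz ew ep ep' hdiv /valG /s.
  have -> : 3 * (q + p'.+1) + 4 + w - (q * 3 + 2) = 3 * p' + 5 + w by lia.
  lia.
Qed.

Lemma len_bounds n r (hn : 2 <= n) (hr : 3 * n + 2 <= r) x y z :
  y + z <= r + 1 ->
  (x + y + z) * (r * (3 * n + 2) + 3 + 3) <= valG n r 0 x y z < (x + y + z).+1 * (r * (3 * n + 2) + 3 + 3).
Proof.
move=> hyz; set s := r * (3 * n + 2) + 3.
have e : valG n r 0 x y z + 2 * y + z = (x + y + z) * (s + 3) + 3 * n * (y + z).
  rewrite /valG /s; lia.
have h1 : 3 * n * (y + z) <= 3 * n * (r + 1) by rewrite leq_mul2l hyz orbT.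
have h2 : 2 * y + z <= 3 * n * (y + z).
  have : 3 * (y + z) <= 3 * n * (y + z).
    by rewrite leq_mul2r; apply/orP; right; lia.
  lia.
apply/andP; split; first lia.
rewrite /s in e *; lia.
Qed.

Theorem mainTheorem7 (n r : nat) (hn : 2 <= n) (hr : 3 * n + 2 <= r) :
  let s := r * (3 * n + 2) + 3 in
  homogeneous_semigroup [:: s; s + 3; s + 3 * n + 1; s + 3 * n + 2].
Proof.
move=> s t Hap t0.
have Hap' := Hap.
case: Hap => [[rr Hf] _].
exists (sumn rr) => l'; split; last by move=> ->; exists rr.
case=> rr' [Hf' <-].
have [a [x [y [z [-> ht]]]]] := factE _ _ _ _ Hf.
have [a' [x' [y' [z' [-> ht']]]]] := factE _ _ _ _ Hf'.
have [ea hb] := ap_shape _ _ hn hr _ _ _ _ _ Hap' ht.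
have [ea' hb'] := ap_shape _ _ hn hr _ _ _ _ _ Hap' ht'.
rewrite ea in ht; rewrite ea' in ht'.
have := len_bounds _ _ hn hr x _ _ hb; have := len_bounds _ _ hn hr x' _ _ hb'.
rewrite /= => /andP [l1 u1] /andP [l2 u2].
rewrite -ht' in l1 u1; rewrite -ht in l2 u2.
have hB : 0 < r * (3 * n + 2) + 3 + 3 by lia.
have c1 : (x' + y' + z') < (x + y + z).+1.
  by rewrite -(ltn_pmul2r hB); apply: leq_ltn_trans l1 u2.
have c2 : (x + y + z) < (x' + y' + z').+1.
  by rewrite -(ltn_pmul2r hB); apply: leq_ltn_trans l2 u1.
lia.
Qed.
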